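(* The measure space \((\mathbb{R}^{\mathbb{N}},\mu)\) is not semi-finite.
   Context: Let $\mathcal{B}$ be the Borel $\sigma$-algebra of $\mathbb{R}$, $\lambda$ the Lebesgue measure, and $\mathcal{B}_{\infty}$ the $\sigma$-algebra on $\mathbb{R}^{\mathbb{N}}$ generated by the cylinder sets $\prod_{i=1}^{m}C_{i}\times\prod_{i=m+1}^{\infty}\mathbb{R}$ with $C_i\in\mathcal{B}$, $m\in\mathbb{N}$. Let $\mathcal{F}(\mathcal{B},\lambda)$ be the set of finite rectangles $\prod_{i\in\mathbb{N}}C_{i}$ with $C_i\in\mathcal{B}$ and $\prod_{i}\lambda(C_i)\in[0,\infty)$, with $\mathrm{vol}(\prod_{i}C_i):=\prod_i\lambda(C_i)$. The measure $\mu$ is the restriction to $\mathcal{B}_{\infty}$ of the outer measure $\mu^{\ast}(A):=\inf\{\sum_{n}\mathrm{vol}(\mathscr{C}_{n}) : \mathscr{C}_{n}\in\mathcal{F}(\mathcal{B},\lambda),\ A\subset\bigcup_{n}\mathscr{C}_{n}\}$ ($\inf\varnothing=\infty$). *)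

(* Defs.v *)
From HB Require Import structures.
From mathcomp Require Import all_boot all_order all_algebra.
From mathcomp Require Import all_classical all_reals all_analysis.
Set Implicit Arguments. Unset Strict Implicit. Unset Printing Implicit Defensive.
Import Order.TTheory GRing.Theory Num.Theory.
Local Open Scope classical_set_scope.
Local Open Scope ring_scope.

(* R here is Borel-measurable (measurableTypeR R = sigma-algebra generated by
   half-open intervals), and lebesgue_measure is the Lebesgue measure on it. *)

Definition cylinders (R : realType) : set (set (nat -> R)) :=
  [set A | exists (m : nat) (C : nat -> set R),
     (forall i, measurable (C i)) /\
     A = [set x | forall i, (i < m)%N -> C i (x i)]].

Definition B_inf (R : realType) : set (set (nat -> R)) :=
  smallest (sigma_algebra setT) (@cylinders R).

Definition rect (R : realType) (C : nat -> set R) : set (nat -> R) :=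
  [set x | forall i, C i (x i)].

Definition finite_rect (R : realType) (C : nat -> set R) (v : R) : Prop :=
  (forall i, measurable (C i)) /\
  ((fun n : nat => (\prod_(i < n) lebesgue_measure (C i))%E) @ \oo --> v%:E).

(* The outer measure mu^*(A) = inf { sum_n vol(C_n) : A covered by countably
   many finite rectangles }, with inf of the empty set = +oo. *)
Definition mu_star (R : realType) (A : set (nat -> R)) : \bar R :=
  ereal_inf [set s | exists (C : nat -> nat -> set R) (v : nat -> R),
     (forall n, finite_rect (C n) (v n)) /\
     A `<=` \bigcup_n rect (C n) /\
     s = (\sum_(0 <= n <oo) (v n)%:E)%E].

Definition semi_finite (R : realType) (T : Type) (M : set (set T))
    (m : set T -> \bar R) : Prop :=
  forall A, M A -> m A = +oo%E ->
    exists B, M B /\ B `<=` A /\ (0 < m B)%E /\ (m B < +oo)%E.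

(* Main.v *)
Require Import Defs.
From HB Require Import structures.
From mathcomp Require Import all_boot all_order all_algebra.
From mathcomp Require Import all_classical all_reals all_analysis.
From mathcomp Require Import ring lra.
Import Order.TTheory GRing.Theory Num.Theory.
Import numFieldNormedType.Exports.
Local Open Scope ring_scope.
Local Open Scope classical_set_scope.
Lemma keyR (R : realType) (c e : nat -> R) (v : R) :
  (forall i, 0 <= e i <= c i) -> (forall i, odd i -> e i <= 2^-1) ->
  (fun n => \prod_(i < n) c i) @ \oo --> v ->
  (fun n => \prod_(i < n) e i) @ \oo --> 0.
Proof.
move=> ec eo Pv.
set P := (fun n => \prod_(i < n) c i) in Pv *.
set E := (fun n => \prod_(i < n) e i).
have c0 i : 0 <= c i by have /andP[h1 h2] := ec i; exact: le_trans h1 h2.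
have EP n : 0 <= E n <= P n.
  apply/andP; split; first by apply: prodr_ge0 => i _; have /andP[] := ec i.
  by apply: ler_prod => i _; exact: ec.
have P0 n : 0 <= P n by apply: prodr_ge0 => i _.
have v0 : 0 <= v.
  rewrite leNgt; apply/negP => vlt0.
  have [N _ HN] := cvgr_lt v Pv 0 vlt0.
  by have := HN N (leqnn N); rewrite ltNge P0.
move: v0; rewrite le_eqVlt => /orP[/eqP v0|vgt0].
  subst v; apply: (@squeeze_cvgr _ _ _ _ (fun=> 0) P) => //.
  - by near=> n; exact: EP.
  - exact: cvg_cst.
have ratio : (fun n => P n.+1 / P n) @ \oo --> (1 : R).
  rewrite -(divff (lt0r_neq0 vgt0)).
  apply: cvgM; last exact: cvgV (lt0r_neq0 vgt0) Pv.
  by move: Pv; rewrite -cvg_shiftS.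
have [N _ HN] : \forall n \near \oo, v / 2 < P n /\ 3/4 < P n.+1 / P n.
  have h : v / 2 < v by lra.
  have h' : 3/4 < (1:R) by lra.
  near=> n; split.
    by near: n; exact: (cvgr_gt v Pv _ h).
  by near: n; exact: (cvgr_gt _ ratio _ h').
have Ppos n : (N <= n)%N -> 0 < P n.
  by move=> /HN [h _]; apply: lt_trans h; lra.
have PS n : P n.+1 = P n * c n by rewrite /P big_ord_recr.
have ES n : E n.+1 = E n * e n by rewrite /E big_ord_recr.
have cgt n : (N <= n)%N -> 3/4 < c n.
  move=> Nn; have [_] := HN n Nn.
  by rewrite PS mulrAC divff ?mul1r // lt0r_neq0 // Ppos.
pose r k := E (k + N)%N / P (k + N)%N.
have r0 k : 0 <= r k by apply: divr_ge0; [case/andP: (EP (k + N)%N)|].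
have rS k : r k.+1 = r k * (e (k + N)%N / c (k + N)%N).
  rewrite /r. rewrite addSn PS ES.
  have h1 : P (k + N)%N != 0 by rewrite lt0r_neq0 // Ppos // leq_addl.
  have h2 : c (k + N)%N != 0.
    by rewrite lt0r_neq0 //; apply: lt_trans (cgt _ (leq_addl _ _)); lra.
  by rewrite invfM mulrACA.
have q1 k : e (k + N)%N / c (k + N)%N <= 1.
  have hc : 0 < c (k + N)%N by apply: lt_trans (cgt _ (leq_addl _ _)); lra.
  by rewrite ler_pdivrMr // mul1r; case/andP: (ec (k + N)%N).
have q0 k : 0 <= e (k + N)%N / c (k + N)%N.
  by apply: divr_ge0; [case/andP: (ec (k + N)%N)|].
have q23 k : odd (k + N)%N -> e (k + N)%N / c (k + N)%N <= 2/3.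
  move=> ok; have hc := cgt _ (leq_addl k N).
  rewrite ler_pdivrMr; last by lra.
  have := eo _ ok; lra.
have rdec k : r k.+1 <= r k.
  by rewrite rS; apply: ler_piMr => //.
have r2 k : r k.+2 <= 2/3 * r k.
  rewrite rS rS -mulrA.
  case ok: (odd (k + N)%N).
    have h := q23 _ ok; have h' := q1 k.+1; have h0 := q0 k.+1; have hr := r0 k.
    have hq := q0 k.
    rewrite mulrC; apply: ler_pM => //.
      by apply: mulr_ge0.
    rewrite -[2/3]mulr1; apply: ler_pM => //.
  have ok' : odd (k.+1 + N)%N by rewrite addSn /= ok.
  have h := q23 _ ok'; have h' := q1 k; have h0 := q0 k.+1; have hr := r0 k.
  have hq := q0 k.
  rewrite mulrC; apply: ler_pM => //.
    by apply: mulr_ge0.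
  rewrite mulrC -[2/3]mulr1; apply: ler_pM => //.
have rcvg : cvgn r.
  apply/cvg_ex; eexists; apply: nonincreasing_cvgn.
    by apply/nonincreasing_seqP.
  by exists 0 => _ [k _ <-].
have rlim : limn r = 0.
  have L0 : 0 <= limn r by apply: limr_ge => //; near=> k.
  have L1 : limn r <= 2/3 * limn r.
    have s2 : (fun k => r (k + 2)%N) @ \oo --> limn r.
      by rewrite (cvg_shiftn 2 r); exact: rcvg.
    have s3 : (fun k => 2/3 * r k) @ \oo --> 2/3 * limn r.
      by apply: cvgMr; exact: rcvg.
    rewrite -(cvg_lim _ s3) // -(cvg_lim _ s2) //.
    apply: ler_lim; [exact: cvgP s2|exact: cvgP s3|].
    by near=> k; rewrite addn2; exact: r2.
  lra.
have rc : r @ \oo --> (0:R) by rewrite -rlim; exact: rcvg.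
have Ps : (fun n => P (n + N)%N) @ \oo --> v by rewrite (cvg_shiftn N P).
have hs : (fun n => E (n + N)%N) @ \oo --> (0:R).
  have -> : (fun n => E (n + N)%N) = (fun n => P (n + N)%N * r n).
    apply/funext => n /=; rewrite /r mulrC divfK //.
    by rewrite lt0r_neq0 // Ppos // leq_addl.
  by rewrite -(mulr0 v); apply: cvgM.
by move: hs; rewrite (cvg_shiftn N E).
Unshelve. all: by end_near.
Qed.

Definition Aset (R : realType) (i : nat) : set R :=
  if odd i then `[0, 2^-1] else setT.

Lemma Aset_meas (R : realType) i : measurable (Aset R i).
Proof. by rewrite /Aset; case: odd; [exact: measurable_itv|exact: measurableT]. Qed.

Lemma L1 (R : realType) (C : nat -> set R) v : finite_rect C v ->
  (exists j, lebesgue_measure (C j) = 0%E) \/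
  (forall i, (lebesgue_measure (C i) < +oo)%E).
Proof.
move=> [mC hv].
have [|nz] := pselect (exists j, lebesgue_measure (C j) = 0%E); first by left.
right => i; rewrite ltNge leye_eq; apply/negP => /eqP Ci.
have pos k : (0 < lebesgue_measure (C k))%E.
  rewrite lt0e measure_ge0 andbT; apply/eqP => h; apply: nz; by exists k.
have Ppos n : (0 < \prod_(k < n) lebesgue_measure (C k))%E.
  elim: n => [|n IH]; first by rewrite big_ord0 lte01.
  by rewrite big_ord_recr /=; apply: mule_gt0.
have Pinf n : (i < n)%N -> (\prod_(k < n) lebesgue_measure (C k))%E = +oo%E.
  elim: n => // n IH; rewrite ltnS leq_eqVlt => /orP[/eqP <-|/IH h];
    rewrite big_ord_recr /=.
    by rewrite Ci gt0_muley // Ppos.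
  by rewrite h gt0_mulye // pos.
move/fine_cvgP: hv => [[N _ HN] _].
have := HN (maxn N i.+1) (leq_maxl _ _).
by rewrite /= Pinf // leq_max ltnSn orbT.
Qed.

Lemma L2 (R : realType) (C : nat -> set R) v : finite_rect C v ->
  finite_rect (fun i => C i `&` Aset R i) 0.
Proof.
move=> hC; have [mC hv] := hC.
have mCA i : measurable (C i `&` Aset R i) by apply: measurableI => //; exact: Aset_meas.
split => //.
have leCA i : (lebesgue_measure (C i `&` Aset R i) <= lebesgue_measure (C i))%E.
  by apply: le_measure; rewrite ?inE; [exact: mCA|exact: mC|exact: subIsetl].
case: (@L1 R C v hC) => [[j hj]|fin].
  apply: cvg_near_cst; exists j.+1 => // n /= jn.
  have hj' : lebesgue_measure (C j `&` Aset R j) = 0%E.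
    by apply/eqP; rewrite eq_le measure_ge0 andbT -hj leCA.
  by rewrite (bigD1 (Ordinal jn)) //= hj' mul0e.
pose c i := fine (lebesgue_measure (C i)).
pose e i := fine (lebesgue_measure (C i `&` Aset R i)).
have finC i : lebesgue_measure (C i) \is a fin_num.
  by rewrite ge0_fin_numE ?measure_ge0.
have finCA i : lebesgue_measure (C i `&` Aset R i) \is a fin_num.
  by rewrite ge0_fin_numE ?measure_ge0 // (le_lt_trans (leCA i)).
have EC n : (\prod_(i < n) lebesgue_measure (C i))%E = (\prod_(i < n) c i)%:E.
  by rewrite -prodEFin; apply: eq_bigr => i _; rewrite /c fineK.
have ECA n : (\prod_(i < n) lebesgue_measure (C i `&` Aset R i))%E = (\prod_(i < n) e i)%:E.
  by rewrite -prodEFin; apply: eq_bigr => i _; rewrite /e fineK.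
have hc : (fun n => \prod_(i < n) c i) @ \oo --> v.
  move: hv; rewrite (_ : (fun n => _) = (fun n => (\prod_(i < n) c i)%:E)); last first.
    by apply/funext => n; exact: EC.
  by move/fine_cvgP => [_ h].
rewrite (_ : (fun n => _) = (fun n => (\prod_(i < n) e i)%:E)); last first.
  by apply/funext => n; exact: ECA.
apply: cvg_EFin; first by near=> n.
apply: (@keyR R c e v) => //.
  move=> i; rewrite /e /c; apply/andP; split; first exact: fine_ge0 (measure_ge0 _ _).
  by apply: fine_le.
move=> i oi; rewrite /e.
have : (lebesgue_measure (C i `&` Aset R i) <= lebesgue_measure (Aset R i))%E.
  by apply: le_measure; rewrite ?inE; [exact: mCA|exact: Aset_meas|exact: subIsetr].
rewrite /Aset oi lebesgue_measure_itv /= lte_fin invr_gt0 ltr0n oppr0 adde0.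
move=> h; rewrite -lee_fin fineK //; move: (finCA i); rewrite /Aset oi.
Unshelve. all: by end_near.
Qed.

Lemma A_Binf (R : realType) : B_inf (rect (Aset R)).
Proof.
have sG : sigma_algebra setT (@B_inf R) by apply: smallest_sigma_algebra.
move: sG; rewrite /sigma_algebra => -[_ sC sU].
pose cyl i : set (nat -> R) := [set x | forall k, (k < i.+1)%N ->
  (if k == i then Aset R i else setT) (x k)].
have cG i : B_inf (cyl i).
  apply: sub_gen_smallest; exists i.+1, (fun k => if k == i then Aset R i else setT).
  split => // k; case: eqP => _; [exact: Aset_meas|exact: measurableT].
have -> : rect (Aset R) = setT `\` \bigcup_i (setT `\` cyl i).
  apply/seteqP; split => x /=.
  - move=> hx; split => // -[i _ /= [_]]; apply => k ki.
    by case: eqP => [->|]//; exact: hx.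
  - move=> [_ H] i; apply: contrapT => nx; apply: H; exists i => //; split => //.
    by move/(_ i (ltnSn i)); rewrite eqxx.
by apply: (sC _); apply: (sU _) => i; apply: (sC _); exact: cG.
Qed.

Lemma exists_out (R : realType) (S T : set R) : measurable S -> measurable T ->
  (lebesgue_measure S < lebesgue_measure T)%E -> exists y, T y /\ ~ S y.
Proof.
move=> mS mT lt; apply: contrapT => nex.
have TS : T `<=` S.
  by move=> y Ty; apply: contrapT => nSy; apply: nex; exists y.
have : (lebesgue_measure T <= lebesgue_measure S)%E.
  by apply: le_measure; rewrite ?inE.
by rewrite leNgt lt.
Qed.

Lemma muA (R : realType) : mu_star (rect (Aset R)) = +oo%E.
Proof.
rewrite /mu_star; set S := [set s | _].
suff -> : S = set0 by rewrite ereal_inf0.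
apply/seteqP; split => // s [C [v [hf [cov _]]]]; exfalso.
pose U i : set R := \bigcup_n (if lebesgue_measure (C n i) == 0%E then C n i else set0).
pose W i : set R := if ~~ odd i && (lebesgue_measure (C i./2 i) < +oo)%E then C i./2 i else set0.
pose N i := U i `|` W i.
have mU i : measurable (U i).
  apply: bigcup_measurable => n _; case: ifP => _; [exact: (hf n).1 | exact: measurable0].
have mW i : measurable (W i).
  by rewrite /W; case: ifP => _; [exact: (hf _).1|exact: measurable0].
have mN i : measurable (N i) by apply: measurableU.
have U0 i : lebesgue_measure (U i) = 0%E.
  apply/eqP; rewrite eq_le measure_ge0 andbT.
  have Fm : forall n, measurable (if lebesgue_measure (C n i) == 0%E then C n i else set0).
    by move=> n; case: ifP => _; [exact: (hf n).1 | exact: measurable0].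
  have h := @measure_sigma_subadditive _ _ _ lebesgue_measure (U i)
    (fun n => if lebesgue_measure (C n i) == 0%E then C n i else set0) Fm (mU i) (subset_refl _).
  apply: (le_trans (h _)); first by [].
  rewrite eseries0 // => n _ _.
  by case: ifP => [/eqP //|_]; rewrite measure0.
have NU i : (lebesgue_measure (N i) <= lebesgue_measure (W i))%E.
  have h := @measureU2 _ _ _ lebesgue_measure (U i) (W i) (mU i) (mW i).
  apply: (le_trans h); rewrite -[X in (_ <= X)%E]add0e; apply: leeD => //; rewrite -(U0 i); exact: lexx.
have exy i : exists y, Aset R i y /\ ~ N i y.
  rewrite /Aset; case oi: (odd i).
    apply: (@exists_out R (N i) `[0, 2^-1]); [exact: mN|exact: measurable_itv|].
    apply: (le_lt_trans (NU i)); rewrite /W oi /= measure0.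
    by rewrite lebesgue_measure_itv /= lte_fin invr_gt0 ltr0n oppr0 adde0 lte_fin invr_gt0 ltr0n.
  have Wfin : (lebesgue_measure (W i) < +oo)%E.
    by rewrite /W oi /=; case: ifP => [//|_]; rewrite measure0.
  have Nfin : lebesgue_measure (N i) \is a fin_num.
    by rewrite ge0_fin_numE ?measure_ge0 // (le_lt_trans (NU i)).
  have [y [_ ny]] : exists y, `[0, fine (lebesgue_measure (N i)) + 1] y /\ ~ N i y.
    apply: (@exists_out R (N i) `[0, fine (lebesgue_measure (N i)) + 1]); [exact: mN|exact: measurable_itv|].
    have h0 : 0 <= fine (lebesgue_measure (N i)) by apply: fine_ge0; exact: measure_ge0.
    rewrite lebesgue_measure_itv /= lte_fin ifT; last by lra.
    by rewrite -(fineK Nfin) oppr0 adde0 lte_fin; lra.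
  by exists y.
have [x hx] := choice exy.
have xA : rect (Aset R) x by move=> i; exact: (hx i).1.
have [n _ xn] := cov x xA.
case: (@L1 R (C n) (v n) (hf n)) => [[j hj]|fin].
  apply: (hx j).2; left; exists n => //; rewrite hj eqxx; exact: xn j.
apply: (hx n.*2).2; right; rewrite /W odd_double doubleK fin /=; exact: xn.
Qed.

Theorem propositionA3 (R : realType) :
  ~ @semi_finite R (nat -> R) (@B_inf R) (@mu_star R).
Proof.
move=> H.
have [B [_ [BA [Bpos Bfin]]]] := H _ (A_Binf R) (muA R).
move: Bpos Bfin; rewrite /mu_star; set S := [set s | _] => Bpos Bfin.
have [s [C [v [hf [cov _]]]]] : exists s, S s.
  apply: contrapT => ns; move: Bfin; rewrite (_ : S = set0) ?ereal_inf0 ?ltxx //.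
  by apply/seteqP; split => // s Ss; apply: ns; exists s.
have : (ereal_inf S <= 0)%E.
  apply: ereal_inf_lbound; exists (fun n i => C n i `&` Aset R i), (fun=> 0).
  split; first by move=> n; exact: (@L2 R (C n) (v n) (hf n)).
  split.
    move=> x Bx; have [n _ xn] := cov x Bx; exists n => // i.
    by split; [exact: xn|exact: BA x Bx i].
  by rewrite eseries0.
by rewrite leNgt Bpos.
Qed.
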